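(* Let $G$ be a solvable group and let $H$ be a subgroup of $G$ with $H\le G'$ (i.e. $r_{ab}(H)=0$). If $H$ is verbally closed in $G$, then $H=1$.
   Context: $G'$ is the derived subgroup of $G$. A subgroup $H\le G$ is verbally closed in $G$ if for every group word $w(x_1,\dots,x_n)$ (without constants) and every $h\in H$, if the equation $w(x_1,\dots,x_n)=h$ has a solution in $G$, then it has a solution in $H$. *)

(* Defs.v *)
Set Implicit Arguments.

Record Group := {
  gcar :> Type;
  gmul : gcar -> gcar -> gcar;
  ginv : gcar -> gcar;
  gone : gcar;
  gmul_assoc : forall x y z, gmul x (gmul y z) = gmul (gmul x y) z;
  gmul_1l : forall x, gmul gone x = x;
  gmul_Vl : forall x, gmul (ginv x) x = gone
}.

Arguments gmul {g}.
Arguments ginv {g}.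
Arguments gone {g}.

Definition is_subgroup (G : Group) (H : G -> Prop) : Prop :=
  H gone /\ (forall x y, H x -> H y -> H (gmul x y)) /\ (forall x, H x -> H (ginv x)).

Definition comm (G : Group) (x y : G) : G :=
  gmul (gmul (ginv x) (ginv y)) (gmul x y).

Inductive commutator_sub (G : Group) (S : G -> Prop) : G -> Prop :=
| cs_comm : forall x y, S x -> S y -> commutator_sub G S (@comm G x y)
| cs_one : commutator_sub G S gone
| cs_mul : forall x y, commutator_sub G S x -> commutator_sub G S y ->
           commutator_sub G S (gmul x y)
| cs_inv : forall x, commutator_sub G S x -> commutator_sub G S (ginv x).

Fixpoint derived_series (G : Group) (n : nat) : G -> Prop :=
  match n with
  | O => fun _ => True
  | S m => commutator_sub G (derived_series G m)
  end.

Definition derived (G : Group) : G -> Prop := derived_series G 1.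

Definition solvable (G : Group) : Prop :=
  exists n, forall x, derived_series G n x -> x = gone.

Inductive word : Type :=
| WVar : nat -> word
| WOne : word
| WMul : word -> word -> word
| WInv : word -> word.

Fixpoint weval (G : Group) (f : nat -> G) (w : word) : G :=
  match w with
  | WVar i => f i
  | WOne => gone
  | WMul u v => gmul (weval G f u) (weval G f v)
  | WInv u => ginv (weval G f u)
  end.

Definition verbally_closed (G : Group) (H : G -> Prop) : Prop :=
  forall (w : word) (h : G), H h ->
    (exists f : nat -> G, weval G f w = h) ->
    exists f : nat -> G, (forall i, H (f i)) /\ weval G f w = h.

(* Main.v *)
Require Import Defs.
From Stdlib Require Import Arith Lia.

Fixpoint wmap (g : nat -> nat) (w : word) : word :=
  match w with
  | WVar i => WVar (g i)
  | WOne => WOne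
  | WMul u v => WMul (wmap g u) (wmap g v)
  | WInv u => WInv (wmap g u)
  end.

Lemma weval_wmap (G : Group) f g w : weval G f (wmap g w) = weval G (fun i => f (g i)) w.
Proof. induction w; simpl; congruence. Qed.

Lemma weval_ext (G : Group) f1 f2 w : (forall i, f1 i = f2 i) -> weval G f1 w = weval G f2 w.
Proof. intros E; induction w; simpl; congruence. Qed.

Definition wcomm (u v : word) : word := WMul (WMul (WInv u) (WInv v)) (WMul u v).

Inductive cword : word -> Prop :=
| cw_comm : forall u v, cword (wcomm u v)
| cw_one : cword WOne
| cw_mul : forall u v, cword u -> cword v -> cword (WMul u v)
| cw_inv : forall u, cword u -> cword (WInv u).

Lemma cword_wmap g w : cword w -> cword (wmap g w).
Proof. induction 1; simpl; try constructor; auto; exact (cw_comm _ _). Qed.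

Lemma cs_words (G : Group) (S : G -> Prop) x :
  commutator_sub G S x -> exists w f, cword w /\ weval G f w = x.
Proof.
  induction 1.
  - exists (wcomm (WVar 0) (WVar 1)), (fun i => match i with 0 => x | _ => y end).
    split; [constructor | reflexivity].
  - exists WOne, (fun _ => gone). split; [constructor | reflexivity].
  - destruct IHcommutator_sub1 as [w1 [f1 [C1 E1]]].
    destruct IHcommutator_sub2 as [w2 [f2 [C2 E2]]].
    exists (WMul (wmap (fun n => Nat.mul 2 n) w1) (wmap (fun n => Datatypes.S (Nat.mul 2 n)) w2)),
      (fun i => if Nat.even i then f1 (Nat.div2 i) else f2 (Nat.div2 i)).
    split. constructor; apply cword_wmap; auto.
    cbn [weval]. rewrite !weval_wmap. rewrite <- E1, <- E2. f_equal; apply weval_ext; intro i.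
    + cbv beta. rewrite Nat.even_mul, Nat.div2_double. reflexivity.
    + cbv beta. rewrite Nat.even_succ, Nat.odd_mul, Nat.div2_succ_double. reflexivity.
  - destruct IHcommutator_sub as [w [f [C E]]].
    exists (WInv w), f. split; [constructor; auto | simpl; congruence].
Qed.

Lemma sub_weval (G : Group) (H : G -> Prop) f w :
  is_subgroup G H -> (forall i, H (f i)) -> H (weval G f w).
Proof.
  intros [H1 [HM HI]] Hf; induction w; simpl; auto.
Qed.

Lemma cword_cs (G : Group) (H : G -> Prop) f w :
  is_subgroup G H -> (forall i, H (f i)) -> cword w -> commutator_sub G H (weval G f w).
Proof.
  intros SH Hf C; induction C; simpl.
  - apply (cs_comm G H (weval G f u) (weval G f v)); apply sub_weval; auto.
  - constructor.
  - constructor; auto.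
  - constructor; auto.
Qed.

Lemma cs_mono (G : Group) (S T : G -> Prop) :
  (forall x, S x -> T x) -> forall x, commutator_sub G S x -> commutator_sub G T x.
Proof. intros ST x C; induction C; constructor; auto. Qed.

Theorem proposition1 (G : Group) (H : G -> Prop) :
  solvable G -> is_subgroup G H ->
  (forall x, H x -> derived G x) ->
  verbally_closed G H ->
  forall x, H x -> x = gone.
Proof.
  intros [n Hn] SH HD VC.
  assert (HH : forall x, H x -> commutator_sub G H x).
  { intros x Hx. destruct (cs_words _ _ _ (HD x Hx)) as [w [f [C E]]].
    destruct (VC w x Hx (ex_intro _ f E)) as [f' [Hf' E']].
    rewrite <- E'. apply cword_cs; auto. }
  assert (Hall : forall m x, H x -> derived_series G m x).
  { induction m; simpl; intros x Hx; auto.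
    apply (cs_mono G H); auto. }
  intros x Hx. apply Hn, Hall, Hx.
Qed.
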